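(* Let $K\subset\mathbb E$ be a regular cone, $F$ a $\nu$-normal barrier for $K$, and $H:\mathbb E\to\mathbb E^*$ a self-adjoint positive definite linear operator. Suppose $u\in\mathbb E$ satisfies $\mathcal E_H(u):=\{w\in\mathbb E:\langle H(w-u),w-u\rangle\le 1\}\subseteq K$, and that for some $x\in\operatorname{int}K$ we have $\langle\nabla F(x),u-x\rangle\ge 0$. Then $H\succeq \frac{1}{4\nu^2}\nabla^2F(x)$. In particular (taking $H$ to be a suitable multiple of $\nabla^2F(u)$ via the Dikin ellipsoid), if $x,u\in\operatorname{int}K$ and $\langle\nabla F(x),u-x\rangle\ge0$ then $\nabla^2F(u)\succeq\frac1{4\nu^2}\nabla^2F(x)$; and if $x\in\operatorname{int}K$, $u\in K$, then $\nabla^2F(x+u)\preceq 4\nu^2\nabla^2F(x)$.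
   Context: $\mathbb E$ is a finite-dimensional real vector space with dual $\mathbb E^*$ and pairing $\langle s,x\rangle$. A cone $K\subset\mathbb E$ is regular if it is closed, convex, pointed, with nonempty interior. A $\nu$-normal barrier for $K$ is a function $F:\operatorname{int}K\to\mathbb R$ which is a $\nu$-self-concordant barrier (i.e. $|D^3F(x)[h,h,h]|\le 2\langle\nabla^2F(x)h,h\rangle^{3/2}$ for all $x\in\operatorname{int}K,h\in\mathbb E$, $F(x)\to\infty$ as $x\to\partial K$, and $\langle\nabla F(x),[\nabla^2F(x)]^{-1}\nabla F(x)\rangle\le\nu$) and is logarithmically homogeneous: $F(\tau x)=F(x)-\nu\ln\tau$ for all $x\in\operatorname{int}K$, $\tau>0$. For self-adjoint operators $P,R:\mathbb E\to\mathbb E^*$, $P\preceq R$ means $\langle (R-P)h,h\rangle\ge0$ for all $h$. *)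

(* Defs.v *)
(* classical reals.  E = R^n, represented by functions
   nat -> R vanishing at coordinates >= n; E^* is identified with R^n
   via the standard pairing; operators E -> E^* are n x n matrices. *)
From Stdlib Require Import Reals.
Open Scope R_scope.

Definition Vec := nat -> R.
Definition Mat := nat -> nat -> R.

Fixpoint sumR (n : nat) (f : nat -> R) : R :=
  match n with O => 0 | S m => sumR m f + f m end.

Definition inE (n : nat) (x : Vec) : Prop := forall i, (n <= i)%nat -> x i = 0.

Definition vzero : Vec := fun _ => 0.
Definition vadd (x y : Vec) : Vec := fun i => x i + y i.
Definition vsub (x y : Vec) : Vec := fun i => x i - y i.
Definition vopp (x : Vec) : Vec := fun i => - x i.
Definition vscal (c : R) (x : Vec) : Vec := fun i => c * x i.

Definition dot (n : nat) (s x : Vec) : R := sumR n (fun i => s i * x i).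

Definition mapply (n : nat) (A : Mat) (h : Vec) : Vec :=
  fun i => if Nat.ltb i n then sumR n (fun j => A i j * h j) else 0.

Definition quad (n : nat) (A : Mat) (h : Vec) : R := dot n (mapply n A h) h.

Definition mscal (c : R) (A : Mat) : Mat := fun i j => c * A i j.

Definition loewner_le (n : nat) (P Q : Mat) : Prop :=
  forall h, inE n h -> quad n P h <= quad n Q h.

Definition selfadj_op (n : nat) (A : Mat) : Prop :=
  forall h k, inE n h -> inE n k -> dot n (mapply n A h) k = dot n (mapply n A k) h.

Definition posdef_op (n : nat) (A : Mat) : Prop :=
  forall h, inE n h -> h <> vzero -> 0 < quad n A h.

Definition vnorm (n : nat) (x : Vec) : R := sqrt (dot n x x).
Definition vdist (n : nat) (x y : Vec) : R := vnorm n (vsub x y).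

Definition cone_int (n : nat) (K : Vec -> Prop) (x : Vec) : Prop :=
  inE n x /\ exists r, 0 < r /\ forall y, inE n y -> vdist n y x < r -> K y.

Definition closed_set (n : nat) (K : Vec -> Prop) : Prop :=
  forall y, inE n y ->
    (forall eps, 0 < eps -> exists z, K z /\ vdist n z y < eps) -> K y.

Definition regular_cone (n : nat) (K : Vec -> Prop) : Prop :=
  (forall x, K x -> inE n x) /\
  (forall x t, K x -> 0 <= t -> K (vscal t x)) /\
  closed_set n K /\
  (forall x y l, K x -> K y -> 0 <= l <= 1 ->
     K (vadd (vscal l x) (vscal (1 - l) y))) /\
  (forall x, K x -> K (vopp x) -> x = vzero) /\
  (exists x, cone_int n K x).

Definition cont_on (n : nat) (P : Vec -> Prop) (f : Vec -> R) : Prop :=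
  forall x, P x -> forall eps, 0 < eps -> exists del, 0 < del /\
    forall y, inE n y -> P y -> vdist n y x < del -> Rabs (f y - f x) < eps.

(* g is the gradient, Hs the Hessian and D3 x h = D^3 F(x)[h,h,h] of F on
   int K, all continuous there (F is C^3 on int K). *)
Definition derivs_on (n : nat) (U : Vec -> Prop) (F : Vec -> R) (g : Vec -> Vec)
  (Hs : Vec -> Mat) (D3 : Vec -> Vec -> R) : Prop :=
  (forall x h, U x -> inE n h ->
     derivable_pt_lim (fun t => F (vadd x (vscal t h))) 0 (dot n (g x) h)) /\
  (forall x h k, U x -> inE n h -> inE n k ->
     derivable_pt_lim (fun t => dot n (g (vadd x (vscal t h))) k) 0
       (dot n (mapply n (Hs x) h) k)) /\
  (forall x h, U x -> inE n h ->
     derivable_pt_lim (fun t => quad n (Hs (vadd x (vscal t h))) h) 0 (D3 x h)) /\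
  cont_on n U F /\
  (forall k, inE n k -> cont_on n U (fun x => dot n (g x) k)) /\
  (forall h k, inE n h -> inE n k -> cont_on n U (fun x => dot n (mapply n (Hs x) h) k)) /\
  (forall h, inE n h -> cont_on n U (fun x => D3 x h)).

Definition normal_barrier (n : nat) (K : Vec -> Prop) (F : Vec -> R)
  (g : Vec -> Vec) (Hs : Vec -> Mat) (nu : R) : Prop :=
  exists D3 : Vec -> Vec -> R,
  derivs_on n (cone_int n K) F g Hs D3 /\
  (* convexity (implicit in the 3/2 power) and self-concordance *)
  (forall x h, cone_int n K x -> inE n h -> 0 <= quad n (Hs x) h) /\
  (forall x h, cone_int n K x -> inE n h ->
     Rabs (D3 x h) <= 2 * (sqrt (quad n (Hs x) h)) ^ 3) /\
  (forall y, K y -> ~ cone_int n K y -> forall M, exists del, 0 < del /\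
     forall x, cone_int n K x -> vdist n x y < del -> M < F x) /\
  (* <grad F(x), [hess F(x)]^{-1} grad F(x)> <= nu (Hessian invertible) *)
  (forall x, cone_int n K x ->
     (forall z, inE n z -> (forall i, (i < n)%nat -> mapply n (Hs x) z i = 0) -> z = vzero) /\
     (forall z, inE n z -> (forall i, (i < n)%nat -> mapply n (Hs x) z i = g x i) ->
        dot n (g x) z <= nu)) /\
  (forall x tau, cone_int n K x -> 0 < tau ->
     F (vscal tau x) = F x - nu * ln tau).

(* Main.v *)
Require Import Defs.
From Stdlib Require Import Reals Lra Lia Psatz FunctionalExtensionality Classical.
From Coquelicot Require Import Coquelicot.
Open Scope R_scope.

Lemma sumR_ext n f g : (forall i, (i < n)%nat -> f i = g i) -> sumR n f = sumR n g.
Proof. induction n; simpl; intros H; auto. rewrite IHn; [rewrite H; auto|intros; apply H; lia]. Qed.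

Lemma sumR_plus n f g : sumR n (fun i => f i + g i) = sumR n f + sumR n g.
Proof. induction n; simpl; [lra|rewrite IHn; lra]. Qed.

Lemma sumR_scal n c f : sumR n (fun i => c * f i) = c * sumR n f.
Proof. induction n; simpl; [lra|rewrite IHn; lra]. Qed.

Lemma sumR_nonneg n f : (forall i, (i < n)%nat -> 0 <= f i) -> 0 <= sumR n f.
Proof. induction n; simpl; intros H; [lra|]. assert (0 <= f n) by (apply H; lia).
  assert (0 <= sumR n f) by (apply IHn; intros; apply H; lia). lra. Qed.

Lemma sumR_le n f g : (forall i, (i < n)%nat -> f i <= g i) -> sumR n f <= sumR n g.
Proof. induction n; simpl; intros H; [lra|]. assert (f n <= g n) by (apply H; lia).
  assert (sumR n f <= sumR n g) by (apply IHn; intros; apply H; lia). lra. Qed.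

Lemma dot_addr n s a b : dot n s (vadd a b) = dot n s a + dot n s b.
Proof. unfold dot, vadd. rewrite <- sumR_plus. apply sumR_ext; intros; ring. Qed.
Lemma dot_addl n s a b : dot n (vadd s a) b = dot n s b + dot n a b.
Proof. unfold dot, vadd. rewrite <- sumR_plus. apply sumR_ext; intros; ring. Qed.
Lemma dot_scalr n s c a : dot n s (vscal c a) = c * dot n s a.
Proof. unfold dot, vscal. rewrite <- sumR_scal. apply sumR_ext; intros; ring. Qed.
Lemma dot_scall n s c a : dot n (vscal c s) a = c * dot n s a.
Proof. unfold dot, vscal. rewrite <- sumR_scal. apply sumR_ext; intros; ring. Qed.
Lemma dot_subr n s a b : dot n s (vsub a b) = dot n s a - dot n s b.
Proof. unfold dot, vsub. replace (sumR n (fun i => s i * a i) - sumR n (fun i => s i * b i))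
  with (sumR n (fun i => s i * a i) + (-1) * sumR n (fun i => s i * b i)) by ring.
  rewrite <- sumR_scal, <- sumR_plus. apply sumR_ext; intros; ring. Qed.
Lemma dot_subl n s a b : dot n (vsub s a) b = dot n s b - dot n a b.
Proof. unfold dot, vsub. replace (sumR n (fun i => s i * b i) - sumR n (fun i => a i * b i))
  with (sumR n (fun i => s i * b i) + (-1) * sumR n (fun i => a i * b i)) by ring.
  rewrite <- sumR_scal, <- sumR_plus. apply sumR_ext; intros; ring. Qed.
Lemma dot_sym n a b : dot n a b = dot n b a.
Proof. unfold dot. apply sumR_ext; intros; ring. Qed.
Lemma dot_self_nonneg n a : 0 <= dot n a a.
Proof. unfold dot. apply sumR_nonneg; intros; nra. Qed.
Lemma dot_zero0 n a : dot n vzero a = 0.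
Proof. unfold dot, vzero. induction n; simpl; auto. rewrite IHn; ring. Qed.

Lemma mapply_add n A a b : mapply n A (vadd a b) = vadd (mapply n A a) (mapply n A b).
Proof. apply functional_extensionality; intro i. unfold mapply, vadd.
  destruct (Nat.ltb i n); [|ring]. rewrite <- sumR_plus. apply sumR_ext; intros; ring. Qed.
Lemma mapply_scal n A c a : mapply n A (vscal c a) = vscal c (mapply n A a).
Proof. apply functional_extensionality; intro i. unfold mapply, vscal.
  destruct (Nat.ltb i n); [|ring]. rewrite <- sumR_scal. apply sumR_ext; intros; ring. Qed.
Lemma mapply_sub n A a b : mapply n A (vsub a b) = vsub (mapply n A a) (mapply n A b).
Proof. apply functional_extensionality; intro i. unfold mapply, vsub.
  destruct (Nat.ltb i n); [|ring].
  replace (sumR n (fun j => A i j * a j) - sumR n (fun j => A i j * b j))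
  with (sumR n (fun j => A i j * a j) + (-1) * sumR n (fun j => A i j * b j)) by ring.
  rewrite <- sumR_scal, <- sumR_plus. apply sumR_ext; intros; ring. Qed.
Lemma mapply_mscal n c A a : mapply n (mscal c A) a = vscal c (mapply n A a).
Proof. apply functional_extensionality; intro i. unfold mapply, vscal, mscal.
  destruct (Nat.ltb i n); [|ring]. rewrite <- sumR_scal. apply sumR_ext; intros; ring. Qed.

Lemma quad_scal n A c a : quad n A (vscal c a) = c^2 * quad n A a.
Proof. unfold quad. rewrite mapply_scal, dot_scall, dot_scalr. ring. Qed.
Lemma quad_mscal n c A a : quad n (mscal c A) a = c * quad n A a.
Proof. unfold quad. rewrite mapply_mscal, dot_scall. ring. Qed.
Lemma quad_par n A a b : quad n A (vadd a b) + quad n A (vsub a b) = 2 * quad n A a + 2 * quad n A b.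
Proof. unfold quad. rewrite mapply_add, mapply_sub, !dot_addl, !dot_subl, !dot_addr, !dot_subr. ring. Qed.
Lemma quad_zero n A : quad n A vzero = 0.
Proof. replace vzero with (vscal 0 vzero). rewrite quad_scal. ring.
  apply functional_extensionality; intro; unfold vscal, vzero; ring. Qed.

Ltac vext := apply functional_extensionality; intro; unfold vadd, vsub, vscal, vopp, vzero.

Lemma vnorm_scal n c v : vnorm n (vscal c v) = Rabs c * vnorm n v.
Proof. unfold vnorm. rewrite dot_scall, dot_scalr, <- Rmult_assoc.
  rewrite sqrt_mult_alt by nra. rewrite <- sqrt_Rsqr_abs. unfold Rsqr. reflexivity. Qed.

Lemma vnorm_nonneg n v : 0 <= vnorm n v.
Proof. apply sqrt_pos. Qed.

Lemma CS_sq n a b : (dot n a b)^2 <= dot n a a * dot n b b.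
Proof.
  set (A := dot n a a). set (B := dot n a b). set (C := dot n b b).
  assert (HA: 0 <= A) by apply dot_self_nonneg. assert (HC: 0 <= C) by apply dot_self_nonneg.
  assert (Hq : forall t, 0 <= A + 2*t*B + t^2 * C).
  { intro t. pose proof (dot_self_nonneg n (vadd a (vscal t b))).
    rewrite dot_addl, !dot_addr, !dot_scall, !dot_scalr in H. rewrite (dot_sym n b a) in H.
    unfold A, B, C. nra. }
  destruct (Rlt_or_le 0 C).
  - specialize (Hq (- B / C)). replace (A + 2 * (- B / C) * B + (- B / C) ^ 2 * C)
      with (A - B^2 / C) in Hq by (field; lra).
    assert (B^2/C <= A) by lra. apply Rmult_le_reg_r with (/C). apply Rinv_0_lt_compat; lra.
    replace (A * C * / C) with A by (field; lra). exact H0.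
  - assert (C = 0) by lra. rewrite H0.
    destruct (Req_dec B 0). rewrite H1; lra.
    specialize (Hq (-(A+1)/(2*B))). rewrite H0 in Hq.
    replace (A + 2 * (- (A + 1) / (2 * B)) * B + (- (A + 1) / (2 * B)) ^ 2 * 0) with (-1) in Hq
      by (field; auto). lra.
Qed.

Lemma CS n a b : dot n a b <= vnorm n a * vnorm n b.
Proof. unfold vnorm. rewrite <- sqrt_mult_alt by apply dot_self_nonneg.
  destruct (Rle_or_lt (dot n a b) 0). pose proof (sqrt_pos (dot n a a * dot n b b)); lra.
  rewrite <- (sqrt_pow2 (dot n a b)) by lra. apply sqrt_le_1_alt. apply CS_sq. Qed.

Lemma vnorm_tri n a b : vnorm n (vadd a b) <= vnorm n a + vnorm n b.
Proof. pose proof (vnorm_nonneg n a). pose proof (vnorm_nonneg n b).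
  unfold vnorm at 1. rewrite <- (sqrt_pow2 (vnorm n a + vnorm n b)) by lra.
  apply sqrt_le_1_alt. rewrite dot_addl, !dot_addr, (dot_sym n b a).
  pose proof (CS n a b). unfold vnorm in *.
  pose proof (sqrt_sqrt (dot n a a) (dot_self_nonneg n a)).
  pose proof (sqrt_sqrt (dot n b b) (dot_self_nonneg n b)). nra. Qed.

Lemma vdist_tri n x y z : vdist n x z <= vdist n x y + vdist n y z.
Proof. unfold vdist. replace (vsub x z) with (vadd (vsub x y) (vsub y z)) by (vext; ring).
  apply vnorm_tri. Qed.

Lemma vdist_sym n x y : vdist n x y = vdist n y x.
Proof. unfold vdist. replace (vsub x y) with (vscal (-1) (vsub y x)) by (vext; ring).
  rewrite vnorm_scal. replace (Rabs (-1)) with 1. ring. rewrite Rabs_left by lra. ring. Qed.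

Lemma vdist_self n x : vdist n x x = 0.
Proof. unfold vdist, vnorm. replace (vsub x x) with vzero by (vext; ring).
  rewrite dot_zero0. apply sqrt_0. Qed.

Lemma inE_add n a b : inE n a -> inE n b -> inE n (vadd a b).
Proof. unfold inE, vadd; intros Ha Hb i Hi; rewrite Ha, Hb; auto; ring. Qed.
Lemma inE_sub n a b : inE n a -> inE n b -> inE n (vsub a b).
Proof. unfold inE, vsub; intros Ha Hb i Hi; rewrite Ha, Hb; auto; ring. Qed.
Lemma inE_scal n c a : inE n a -> inE n (vscal c a).
Proof. unfold inE, vscal; intros Ha i Hi; rewrite Ha; auto; ring. Qed.

Section Cone.
End Cone.

Lemma K_inE n K x : regular_cone n K -> K x -> inE n x.
Proof. intros [H _]; auto. Qed.

Lemma int_K n K x : cone_int n K x -> K x.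
Proof. intros [Hx [r [Hr H]]]. apply H; auto. rewrite vdist_self; auto. Qed.

Lemma int_inE n K x : cone_int n K x -> inE n x.
Proof. intros [Hx _]; auto. Qed.

Lemma K_add n K a b : regular_cone n K -> K a -> K b -> K (vadd a b).
Proof. intros HK Ha Hb. destruct HK as [_ [Hs [_ [Hc _]]]].
  replace (vadd a b) with (vadd (vscal (1/2) (vscal 2 a)) (vscal (1 - 1/2) (vscal 2 b))) by (vext; field).
  apply Hc; try apply Hs; auto; lra. Qed.

Lemma int_scal n K x t : regular_cone n K -> cone_int n K x -> 0 < t -> cone_int n K (vscal t x).
Proof. intros HK [Hx [r [Hr H]]] Ht. split. apply inE_scal; auto.
  exists (t * r). split. nra. intros y Hy Hd.
  destruct HK as [_ [Hs _]].
  replace y with (vscal t (vscal (/t) y)) by (vext; field; lra).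
  apply Hs; [|lra]. apply H. apply inE_scal; auto.
  unfold vdist. replace (vsub (vscal (/ t) y) x) with (vscal (/t) (vsub y (vscal t x))) by (vext; field; lra).
  rewrite vnorm_scal. rewrite Rabs_right by (left; apply Rinv_0_lt_compat; lra).
  unfold vdist in Hd. apply Rmult_lt_reg_l with t; auto. replace (t * (/ t * vnorm n (vsub y (vscal t x)))) with (vnorm n (vsub y (vscal t x))) by (field; lra). lra.
Qed.

Lemma int_add n K x w : regular_cone n K -> cone_int n K x -> K w -> cone_int n K (vadd x w).
Proof. intros HK [Hx [r [Hr H]]] Hw. pose proof (K_inE _ _ _ HK Hw). split. apply inE_add; auto.
  exists r. split; auto. intros y Hy Hd.
  replace y with (vadd (vsub y w) w) by (vext; ring). apply (K_add n); auto.
  apply H. apply inE_sub; auto. unfold vdist in *.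
  replace (vsub (vsub y w) x) with (vsub y (vadd x w)) by (vext; ring). auto. Qed.

Lemma int_open n K x : cone_int n K x -> exists r, 0 < r /\
  forall y, inE n y -> vdist n y x < r -> cone_int n K y.
Proof. intros [Hx [r [Hr H]]]. exists (r/2). split. lra. intros y Hy Hd.
  split; auto. exists (r/2). split. lra. intros z Hz Hd2. apply H; auto.
  pose proof (vdist_tri n z y x). lra. Qed.

Lemma D_ext f g x l : (forall y, f y = g y) -> derivable_pt_lim f x l -> derivable_pt_lim g x l.
Proof. intros H D. replace g with f; auto. apply functional_extensionality; auto. Qed.

Lemma D_local f g x l d : 0 < d -> (forall y, Rabs (y - x) < d -> f y = g y) ->
  derivable_pt_lim f x l -> derivable_pt_lim g x l.
Proof. intros Hd H D eps He. destruct (D eps He) as [del Hdel].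
  assert (Hm: 0 < Rmin del d) by (apply Rmin_pos; [apply cond_pos|auto]).
  exists (mkposreal _ Hm). intros h Hh Hlt. simpl in Hlt.
  rewrite <- !H. apply Hdel; auto. apply Rlt_le_trans with (1 := Hlt); apply Rmin_l.
  rewrite Rminus_diag, Rabs_R0; auto.
  replace (x + h - x) with h by ring. apply Rlt_le_trans with (1 := Hlt); apply Rmin_r.
Qed.

Lemma D_shift f0 G t l : (forall s, f0 s = G (t + s)) -> derivable_pt_lim f0 0 l ->
  derivable_pt_lim G t l.
Proof. intros H D eps He. destruct (D eps He) as [del Hdel]. exists del.
  intros h Hh Hlt. specialize (Hdel h Hh Hlt). rewrite !H in Hdel.
  rewrite Rplus_0_l, Rplus_0_r in Hdel. exact Hdel. Qed.

Lemma L_ub f f' a b c : a <= b -> (forall t, a <= t <= b -> derivable_pt_lim f t (f' t)) ->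
  (forall t, a <= t <= b -> f' t <= c) -> f b <= f a + c * (b - a).
Proof. intros Hab D B. destruct (Req_dec a b). subst; lra.
  destruct (MVT_cor2 f f' a b) as [x [Hx Hx2]]; [lra|auto|].
  assert (f' x <= c) by (apply B; lra). nra. Qed.

Lemma L_lb f f' a b c : a <= b -> (forall t, a <= t <= b -> derivable_pt_lim f t (f' t)) ->
  (forall t, a <= t <= b -> c <= f' t) -> f a + c * (b - a) <= f b.
Proof. intros Hab D B. destruct (Req_dec a b). subst; lra.
  destruct (MVT_cor2 f f' a b) as [x [Hx Hx2]]; [lra|auto|].
  assert (c <= f' x) by (apply B; lra). nra. Qed.

Lemma L_tan f f1 f2 a b : a <= b ->
  (forall t, a <= t <= b -> derivable_pt_lim f t (f1 t) /\ derivable_pt_lim f1 t (f2 t) /\ 0 <= f2 t) ->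
  f a + (b - a) * f1 a <= f b /\ f b - (b - a) * f1 b <= f a.
Proof. intros Hab H. split.
  - assert (f a + f1 a * (b - a) <= f b). apply L_lb with f1; auto. intros; apply H; auto.
    intros t Ht. pose proof (L_lb f1 f2 a t 0). assert (f1 a + 0 * (t - a) <= f1 t).
    apply H0; try lra. intros; apply H; lra. intros; apply H; lra. lra. lra.
  - assert (f b <= f a + f1 b * (b - a)). apply L_ub with f1; auto. intros; apply H; auto.
    intros t Ht. pose proof (L_lb f1 f2 t b 0). assert (f1 t + 0 * (b - t) <= f1 b).
    apply H0; try lra. intros; apply H; lra. intros; apply H; lra. lra. lra.
Qed.

Lemma L_chord f f1 f2 l :
  (forall t, 0 <= t <= 1 -> derivable_pt_lim f t (f1 t) /\ derivable_pt_lim f1 t (f2 t) /\ 0 <= f2 t) ->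
  0 <= l <= 1 -> f l <= (1 - l) * f 0 + l * f 1.
Proof. intros H Hl.
  destruct (L_tan f f1 f2 0 l) as [_ H1]. lra. intros; apply H; lra.
  destruct (L_tan f f1 f2 l 1) as [H2 _]. lra. intros; apply H; lra. nra. Qed.

Definition pl (y h : Vec) (t : R) : Vec := vadd y (vscal t h).

Lemma pl_shift y h t s : vadd (pl y h t) (vscal s h) = pl y h (t + s).
Proof. unfold pl; vext; ring. Qed.

Lemma pl_inE n y h t : inE n y -> inE n h -> inE n (pl y h t).
Proof. intros; unfold pl; apply inE_add; auto; apply inE_scal; auto. Qed.

Section X. End X.

Lemma LD n K F g Hs nu y h t : normal_barrier n K F g Hs nu -> inE n h -> cone_int n K (pl y h t) ->
  derivable_pt_lim (fun s => F (pl y h s)) t (dot n (g (pl y h t)) h) /\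
  derivable_pt_lim (fun s => dot n (g (pl y h s)) h) t (quad n (Hs (pl y h t)) h) /\
  0 <= quad n (Hs (pl y h t)) h.
Proof. intros [D3 [[d1 [d2 [d3 _]]] [Hpsd _]]] Hh Hp. split; [|split].
  - apply D_shift with (f0 := fun s => F (vadd (pl y h t) (vscal s h))).
    intros; rewrite pl_shift; auto. apply d1; auto.
  - apply D_shift with (f0 := fun s => dot n (g (vadd (pl y h t) (vscal s h))) h).
    intros; rewrite pl_shift; auto. apply d2; auto.
  - apply Hpsd; auto.
Qed.

Lemma LD3 n K F g Hs nu y h t : normal_barrier n K F g Hs nu -> inE n h -> cone_int n K (pl y h t) ->
  exists d3, derivable_pt_lim (fun s => quad n (Hs (pl y h s)) h) t d3 /\
     Rabs d3 <= 2 * (sqrt (quad n (Hs (pl y h t)) h)) ^ 3.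
Proof. intros [D3 [[d1 [d2 [d3 _]]] [Hpsd [Hsc _]]]] Hh Hp. exists (D3 (pl y h t) h). split.
  - apply D_shift with (f0 := fun s => quad n (Hs (vadd (pl y h t) (vscal s h))) h).
    intros; rewrite pl_shift; auto. apply d3; auto.
  - apply Hsc; auto.
Qed.

Lemma homog n K F g Hs nu x tau : normal_barrier n K F g Hs nu -> cone_int n K x -> 0 < tau ->
  F (vscal tau x) = F x - nu * ln tau.
Proof. intros HB; destruct HB as [_ [_ [_ [_ [_ [_ Hh]]]]]]; auto. Qed.

Lemma I2 n K F g Hs nu x : regular_cone n K -> normal_barrier n K F g Hs nu -> cone_int n K x ->
  dot n (g x) x = - nu.
Proof. intros HK HB Hx.
  assert (D1 : derivable_pt_lim (fun t => F (pl x x t)) 0 (dot n (g x) x)).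
  { pose proof HB as [D3 [[d1 _] _]]. apply d1; auto. apply (int_inE _ _ _ Hx). }
  assert (D2 : derivable_pt_lim (fun t => F x - nu * ln (1 + t)) 0 (- nu)).
  { apply is_derive_Reals. auto_derive. lra. rewrite Rplus_0_r. field. }
  apply (uniqueness_limite (fun t => F (pl x x t)) 0); auto.
  apply D_local with (f := fun t => F x - nu * ln (1 + t)) (d := 1); [lra| |auto].
  intros s Hs0. unfold pl. replace (vadd x (vscal s x)) with (vscal (1 + s) x) by (vext; ring).
  rewrite (homog n K F g Hs nu); auto. rewrite Rminus_0_r in Hs0. apply Rabs_def2 in Hs0; lra.
Qed.

Lemma ln2_lt1 : ln 2 < 1.
Proof. rewrite <- ln_exp with 1. apply ln_increasing. lra.
  pose proof (exp_ineq1 1). lra. Qed.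

Lemma nu_nonneg n K F g Hs nu : regular_cone n K -> normal_barrier n K F g Hs nu -> 0 <= nu.
Proof. intros HK HB. pose proof HK as [_ [_ [_ [_ [_ [x Hx]]]]]].
  assert (Hp : forall t, 0 <= t <= 1 -> cone_int n K (pl x x t)).
  { intros t Ht. unfold pl. replace (vadd x (vscal t x)) with (vscal (1 + t) x) by (vext; ring).
    apply int_scal; auto; lra. }
  destruct (L_tan (fun s => F (pl x x s)) (fun s => dot n (g (pl x x s)) x)
    (fun s => quad n (Hs (pl x x s)) x) 0 1) as [H _]. lra.
  intros t Ht. apply (LD n K F g Hs nu); auto. apply (int_inE _ _ _ Hx).
  simpl in H. unfold pl in H.
  replace (vadd x (vscal 0 x)) with x in H by (vext; ring).
  replace (vadd x (vscal 1 x)) with (vscal 2 x) in H by (vext; ring).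
  rewrite (homog n K F g Hs nu) in H; auto; try lra.
  rewrite (I2 n K F g Hs nu) in H; auto. pose proof ln2_lt1. nra.
Qed.

Lemma Rdiv_le_0_compat a b : 0 <= a -> 0 < b -> 0 <= a / b.
Proof. intros; unfold Rdiv; apply Rmult_le_pos; auto; left; apply Rinv_0_lt_compat; auto. Qed.

Lemma seg_int n K x w l : regular_cone n K -> cone_int n K x -> cone_int n K w -> 0 <= l <= 1 ->
  cone_int n K (pl x (vsub w x) l).
Proof. intros HK Hx Hw Hl. destruct (Req_dec l 1).
  - subst. unfold pl. replace (vadd x (vscal 1 (vsub w x))) with w by (vext; ring). auto.
  - unfold pl. replace (vadd x (vscal l (vsub w x))) with (vadd (vscal (1 - l) x) (vscal l w)) by (vext; ring).
    apply int_add; auto. apply int_scal; auto; lra.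
    pose proof HK as [_ [Hs _]]. apply Hs; [apply (int_K _ _ _ Hw)|lra].
Qed.

Lemma ray_int n K x w t : regular_cone n K -> cone_int n K x -> K w -> 0 <= t -> cone_int n K (pl x w t).
Proof. intros HK Hx Hw Ht. unfold pl. apply int_add; auto. pose proof HK as [_ [Hs _]]. apply Hs; auto. Qed.

Lemma I1_int n K F g Hs nu x w : regular_cone n K -> normal_barrier n K F g Hs nu ->
  cone_int n K x -> cone_int n K w -> dot n (g x) w <= 0.
Proof. intros HK HB Hx Hw. pose proof (int_inE _ _ _ Hx) as Hxe. pose proof (int_inE _ _ _ Hw) as Hwe.
  pose proof (int_K _ _ _ Hw) as HwK.
  destruct (Rle_or_lt (dot n (g x) w) 0) as [|Ha]; auto. exfalso.
  set (a := dot n (g x) w) in *. set (M := Rabs (F x) + Rabs (F w)).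
  assert (Hlow : forall t, 0 <= t -> F x + t * a <= F (pl x w t)).
  { intros t Ht. destruct (L_tan (fun s => F (pl x w s)) (fun s => dot n (g (pl x w s)) w)
      (fun s => quad n (Hs (pl x w s)) w) 0 t) as [H _]; auto.
    intros s Hs0. apply (LD n K F g Hs nu); auto. apply ray_int; auto; lra.
    simpl in H. unfold pl in H at 1 2. replace (vadd x (vscal 0 w)) with x in H by (vext; ring).
    fold a in H. lra. }
  assert (Hup : forall t, 0 <= t -> F (pl x w t) <= M).
  { intros t Ht. set (l := t / (1 + t)).
    assert (Hl : 0 <= l <= 1). { unfold l. split. apply Rdiv_le_0_compat; lra.
      apply Rmult_le_reg_r with (1 + t). lra. unfold Rdiv. rewrite Rmult_assoc, Rinv_l; lra. }
    assert (E : pl x w t = vscal (1 + t) (pl x (vsub w x) l)).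
    { unfold pl, l; vext; field; lra. }
    rewrite E, (homog n K F g Hs nu); [| auto | apply seg_int; auto | lra].
    pose proof (nu_nonneg n K F g Hs nu HK HB).
    assert (0 <= ln (1 + t)). { rewrite <- ln_1. destruct (Req_dec t 0). subst; rewrite Rplus_0_r; lra. left; apply ln_increasing; lra. }
    pose proof (L_chord (fun s => F (pl x (vsub w x) s)) (fun s => dot n (g (pl x (vsub w x) s)) (vsub w x))
      (fun s => quad n (Hs (pl x (vsub w x) s)) (vsub w x)) l) as Hc.
    simpl in Hc. replace (pl x (vsub w x) 0) with x in Hc by (unfold pl; vext; ring).
    replace (pl x (vsub w x) 1) with w in Hc by (unfold pl; vext; ring).
    assert (F (pl x (vsub w x) l) <= (1 - l) * F x + l * F w).
    { apply Hc; auto. intros s Hs0. apply (LD n K F g Hs nu); auto. apply inE_sub; auto.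
      apply seg_int; auto. }
    unfold M. pose proof (Rle_abs (F x)). pose proof (Rle_abs (F w)).
    pose proof (Rabs_pos (F x)). pose proof (Rabs_pos (F w)). nra. }
  set (t := (M + Rabs (F x) + 1) / a).
  assert (0 <= t). { unfold t, M. apply Rdiv_le_0_compat; [|lra].
    pose proof (Rabs_pos (F x)). pose proof (Rabs_pos (F w)). lra. }
  specialize (Hlow t H). specialize (Hup t H).
  replace (t * a) with (M + Rabs (F x) + 1) in Hlow by (unfold t; field; lra).
  pose proof (Rle_abs (- F x)). rewrite Rabs_Ropp in H0. lra.
Qed.

Lemma I1 n K F g Hs nu x w : regular_cone n K -> normal_barrier n K F g Hs nu ->
  cone_int n K x -> K w -> dot n (g x) w <= 0.
Proof. intros HK HB Hx Hw. pose proof (I2 n K F g Hs nu x HK HB Hx).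
  pose proof (nu_nonneg n K F g Hs nu HK HB).
  assert (He : forall e, 0 < e -> dot n (g x) w <= e * nu).
  { intros e He. assert (cone_int n K (vadd (vscal e x) w)) by (apply int_add; auto; apply int_scal; auto).
    pose proof (I1_int n K F g Hs nu x _ HK HB Hx H1). rewrite dot_addr, dot_scalr in H2. nra. }
  destruct (Rle_or_lt (dot n (g x) w) 0); auto.
  destruct (Req_dec nu 0). specialize (He 1). rewrite H2 in He. lra.
  specialize (He (dot n (g x) w / (2 * nu))). 
  assert (dot n (g x) w <= dot n (g x) w / (2 * nu) * nu). apply He. apply Rdiv_lt_0_compat; lra.
  replace (dot n (g x) w / (2 * nu) * nu) with (dot n (g x) w / 2) in H3 by (field; lra). lra.
Qed.

Lemma L_invsqrt q t d eps : derivable_pt_lim q t d -> 0 < q t + eps ->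
  derivable_pt_lim (fun s => / sqrt (q s + eps)) t (- d / (2 * (sqrt (q t + eps))^3)).
Proof. intros D H. apply is_derive_Reals in D. apply is_derive_Reals.
  assert (Hs : 0 < sqrt (q t + eps)) by (apply sqrt_lt_R0; auto).
  auto_derive. split. exists d; auto. split; auto. split; auto. lra.
  replace (Derive (fun x => q x) t) with d. field. lra.
  symmetry. apply is_derive_unique. auto.
Qed.
Lemma L_rat A t : 0 < 1 + t * A -> derivable_pt_lim (fun s => A / (1 + s * A)) t (- A^2 / (1 + t * A)^2).
Proof. intros H. apply is_derive_Reals. auto_derive. lra. field. lra. Qed.
Lemma L_lin e t : derivable_pt_lim (fun s => e * s) t e.
Proof. apply is_derive_Reals. auto_derive. auto. ring. Qed.

Lemma sqrt3_mono a b : 0 <= a <= b -> (sqrt a)^3 <= (sqrt b)^3.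
Proof. intros H. assert (sqrt a <= sqrt b) by (apply sqrt_le_1_alt; lra).
  pose proof (sqrt_pos a). apply pow_incr. lra. Qed.

Lemma I3 n K F g Hs nu x w : regular_cone n K -> normal_barrier n K F g Hs nu ->
  cone_int n K x -> K w -> quad n (Hs x) w <= (dot n (g x) w)^2.
Proof. intros HK HB Hx Hw. pose proof HB as [D3 [[d1 [d2 [d3 _]]] [Hpsd [Hsc _]]]].
  pose proof (K_inE _ _ _ HK Hw) as Hwe.
  set (p := pl x w).
  assert (Hp : forall t, 0 <= t -> cone_int n K (p t)) by (intros; apply ray_int; auto).
  set (f1 := fun t => dot n (g (p t)) w). set (q := fun t => quad n (Hs (p t)) w).
  set (dd := fun t => D3 (p t) w).
  assert (Dq : forall t, 0 <= t -> derivable_pt_lim q t (dd t)).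
  { intros t Ht. apply D_shift with (f0 := fun s => quad n (Hs (vadd (p t) (vscal s w))) w).
    intros; unfold q, p; rewrite pl_shift; auto. apply d3; auto. }
  assert (Df1 : forall t, 0 <= t -> derivable_pt_lim f1 t (q t)).
  { intros t Ht. apply (LD n K F g Hs nu); auto. }
  assert (Hq0 : forall t, 0 <= t -> 0 <= q t) by (intros; apply Hpsd; auto).
  assert (Hf1 : forall t, 0 <= t -> f1 t <= 0) by (intros; apply (I1 n K F g Hs nu); auto).
  assert (Hdd : forall t, 0 <= t -> Rabs (dd t) <= 2 * (sqrt (q t))^3) by (intros; apply Hsc; auto).
  assert (E0 : p 0 = x) by (unfold p, pl; vext; ring).
  replace (quad n (Hs x) w) with (q 0) by (unfold q; rewrite E0; auto).
  replace (dot n (g x) w) with (f1 0) by (unfold f1; rewrite E0; auto).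
  set (Q := q 0). set (b := - f1 0).
  assert (Hb : 0 <= b) by (unfold b; pose proof (Hf1 0); lra).
  replace (f1 0 ^ 2) with (b^2) by (unfold b; ring).
  destruct (Rle_or_lt Q (b^2)) as [|HQ]; auto. exfalso.
  assert (HQ0 : 0 <= Q) by (apply Hq0; lra).
  set (a := sqrt Q).
  assert (Ha0 : 0 <= a) by apply sqrt_pos.
  assert (Hab : b < a). { unfold a. rewrite <- (sqrt_pow2 b) by lra. apply sqrt_lt_1_alt. nra. }
  assert (Key : forall eps T, 0 < eps -> 0 <= T -> a^2 * T / (1 + T * a) - eps * T <= b).
  { intros eps T He HT. set (A := sqrt (Q + eps)).
    assert (HA : a <= A) by (apply sqrt_le_1_alt; lra).
    assert (HA0 : 0 < A) by (apply sqrt_lt_R0; lra).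
    assert (HAA : A * A = Q + eps) by (apply sqrt_sqrt; lra).
    assert (Hlow : forall t, 0 <= t -> A^2 / (1 + t * A)^2 <= q t + eps).
    { intros t Ht.
      assert (Hfe : / sqrt (q t + eps) <= / sqrt (q 0 + eps) + 1 * (t - 0)).
      { apply (L_ub (fun s => / sqrt (q s + eps)) (fun s => - dd s / (2 * (sqrt (q s + eps))^3)) 0 t 1); auto.
        intros s Hs0. apply L_invsqrt. apply Dq; lra. pose proof (Hq0 s); lra.
        intros s Hs0. pose proof (Hq0 s ltac:(lra)). pose proof (Hdd s ltac:(lra)).
        set (S := sqrt (q s + eps)). assert (0 < S) by (apply sqrt_lt_R0; lra).
        pose proof (sqrt3_mono (q s) (q s + eps) ltac:(lra)). fold S in H2.
        pose proof (Rle_abs (- dd s)) as H0'; rewrite Rabs_Ropp in H0'.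
        apply Rmult_le_reg_r with (2 * S^3). apply Rmult_lt_0_compat; [lra|apply pow_lt; auto].
        replace (- dd s / (2 * S ^ 3) * (2 * S ^ 3)) with (- dd s) by (field; repeat split; lra). lra. }
      fold A in Hfe. set (S := sqrt (q t + eps)) in *. assert (0 < S) by (apply sqrt_lt_R0; pose proof (Hq0 t Ht); lra).
      assert (HSS : S * S = q t + eps) by (apply sqrt_sqrt; pose proof (Hq0 t Ht); lra).
      assert (A / (1 + t * A) <= S).
      { apply Rmult_le_reg_r with ((1 + t*A) / (A * S)). apply Rdiv_lt_0_compat; nra.
        replace (A / (1 + t * A) * ((1 + t * A) / (A * S))) with (/ S) by (field; repeat split; nra).
        replace (S * ((1 + t * A) / (A * S))) with (/ A + t) by (field; repeat split; lra). replace (sqrt (q 0 + eps)) with A in Hfe by reflexivity. lra. }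
      rewrite <- HSS. replace (A ^ 2 / (1 + t * A) ^ 2) with ((A / (1 + t * A)) * (A / (1 + t*A))) by (field; nra).
      apply Rmult_le_compat; auto; apply Rdiv_le_0_compat; nra. }
    set (G := fun s => f1 s + A / (1 + s * A) + eps * s).
    assert (HG : G 0 + 0 * (T - 0) <= G T).
    { apply (L_lb G (fun s => q s + - A^2 / (1 + s * A)^2 + eps) 0 T 0); auto.
      intros s Hs0. unfold G. apply D_ext with (f := plus_fct (plus_fct f1 (fun s => A / (1 + s * A))) (fun s => eps * s)).
      intros; unfold plus_fct; auto.
      apply derivable_pt_lim_plus. apply derivable_pt_lim_plus. apply Df1; lra. apply L_rat; nra. apply L_lin.
      intros s Hs0. pose proof (Hlow s ltac:(lra)). lra. }
    unfold G in HG. pose proof (Hf1 T HT).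
    replace (A / (1 + 0 * A)) with A in HG by (field; lra).
    assert (a ^ 2 * T / (1 + T * a) <= A ^ 2 * T / (1 + T * A)).
    { assert (0 < 1 + T * a) by nra. assert (0 < 1 + T * A) by nra.
      apply Rmult_le_reg_r with ((1 + T * a) * (1 + T * A)). apply Rmult_lt_0_compat; auto.
      replace (a ^ 2 * T / (1 + T * a) * ((1 + T * a) * (1 + T * A))) with (a^2 * T * (1 + T * A)) by (field; lra).
      replace (A ^ 2 * T / (1 + T * A) * ((1 + T * a) * (1 + T * A))) with (A^2 * T * (1 + T * a)) by (field; lra).
      assert (0 <= A - a) by lra. assert (0 <= T * A * a) by (apply Rmult_le_pos; [apply Rmult_le_pos|]; lra).
      assert (0 <= T * ((A - a) * (A + a) + T * A * a * (A - a))).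
      { apply Rmult_le_pos; auto. apply Rplus_le_le_0_compat; apply Rmult_le_pos; lra. }
      assert (A ^ 2 * T * (1 + T * a) - a ^ 2 * T * (1 + T * A) = T * ((A - a) * (A + a) + T * A * a * (A - a))) by ring.
      lra. }
    assert (A ^ 2 * T / (1 + T * A) = A - A / (1 + T * A)) by (field; nra).
    unfold b in *. lra. }
  set (T := (2 * b + 1) / (a * (a - b))).
  assert (HT : 0 < T) by (unfold T; apply Rdiv_lt_0_compat; nra).
  assert (HTa : a * T * (a - b) = 2 * b + 1) by (unfold T; field; nra).
  set (eps := (b + 1) / (2 * T * (1 + T * a))).
  assert (Hep : 0 < eps) by (unfold eps; apply Rdiv_lt_0_compat; nra).
  pose proof (Key eps T Hep (Rlt_le _ _ HT)).
  assert (a ^ 2 * T / (1 + T * a) - b = (b + 1) / (1 + T * a)).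
  { apply Rmult_eq_reg_r with (1 + T * a); [|nra].
    replace ((a ^ 2 * T / (1 + T * a) - b) * (1 + T * a)) with (a * T * (a - b) - b) by (field; nra).
    rewrite HTa. field. nra. }
  assert (eps * T = (b + 1) / (2 * (1 + T * a))) by (unfold eps; field; nra).
  assert (0 < (b + 1) / (2 * (1 + T * a))) by (apply Rdiv_lt_0_compat; nra).
  assert ((b + 1) / (1 + T * a) = 2 * ((b + 1) / (2 * (1 + T * a)))) by (field; nra).
  lra.
Qed.

Lemma vdist_pl n y h s t : vdist n (pl y h s) (pl y h t) = Rabs (s - t) * vnorm n h.
Proof. unfold vdist. replace (vsub (pl y h s) (pl y h t)) with (vscal (s - t) h) by (unfold pl; vext; ring).
  apply vnorm_scal. Qed.

Lemma approach_left T N e : 0 < T -> 0 <= N -> 0 < e -> exists s, 0 <= s < T /\ Rabs (s - T) * N < e.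
Proof. intros HT HN He. set (s := Rmax 0 (T - e / (N + 1))). exists s.
  assert (Hd : 0 < e / (N + 1)) by (apply Rdiv_lt_0_compat; lra).
  assert (Hd2 : e / (N + 1) * N < e).
  { apply Rmult_lt_reg_r with (N + 1). lra.
    replace (e / (N + 1) * N * (N + 1)) with (e * N) by (field; lra). nra. }
  unfold s. destruct (Rle_or_lt 0 (T - e / (N + 1))).
  - rewrite Rmax_right by auto. split. lra.
    replace (T - e / (N + 1) - T) with (- (e / (N + 1))) by ring. rewrite Rabs_Ropp, Rabs_right by lra. auto.
  - rewrite Rmax_left by lra. split. lra. rewrite Rminus_0_l, Rabs_Ropp, Rabs_right by lra.
    apply Rle_lt_trans with (e / (N + 1) * N); auto. apply Rmult_le_compat_r; lra.
Qed.

Lemma Fbound n K F g Hs nu u h t1 T : regular_cone n K -> normal_barrier n K F g Hs nu -> inE n h ->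
  quad n (Hs (pl u h 0)) h <= 1 -> 0 <= t1 < 1 -> T <= t1 ->
  (forall s, 0 <= s < T -> cone_int n K (pl u h s)) ->
  exists M0, forall s, 0 <= s < T -> F (pl u h s) <= M0.
Proof. intros HK HB Hh HQ Ht1 HTt HA. pose proof HB as [D3 [[d1 [d2 [d3 _]]] [Hpsd [Hsc _]]]].
  set (p := pl u h) in *.
  set (f1 := fun t => dot n (g (p t)) h). set (q := fun t => quad n (Hs (p t)) h).
  set (dd := fun t => D3 (p t) h).
  assert (Dq : forall t, 0 <= t < T -> derivable_pt_lim q t (dd t)).
  { intros t Ht. apply D_shift with (f0 := fun s => quad n (Hs (vadd (p t) (vscal s h))) h).
    intros; unfold q, p; rewrite pl_shift; auto. apply d3; auto. }
  assert (DF : forall t, 0 <= t < T -> derivable_pt_lim (fun s => F (p s)) t (f1 t) /\ derivable_pt_lim f1 t (q t)).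
  { intros t Ht. destruct (LD n K F g Hs nu u h t) as [X [Y _]]; auto. }
  assert (Hq0 : forall t, 0 <= t < T -> 0 <= q t) by (intros; apply Hpsd; auto).
  assert (Hdd : forall t, 0 <= t < T -> Rabs (dd t) <= 2 * (sqrt (q t))^3) by (intros; apply Hsc; auto).
  set (eps := 4 / (1 + t1)^2 - 1).
  assert (Heps : 0 < eps).
  { unfold eps. assert (4 / (1 + t1) ^ 2 > 1); [|lra].
    apply Rmult_gt_reg_r with ((1 + t1)^2). nra. replace (4 / (1 + t1) ^ 2 * (1 + t1) ^ 2) with 4 by (field; lra). nra. }
  set (c := (1 - t1) / 2). set (C := / c ^ 2).
  assert (Hc : 0 < c) by (unfold c; lra).
  assert (HqC : forall s, 0 <= s < T -> q s <= C).
  { intros s Hs0.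
    assert (Hfe : / sqrt (q 0 + eps) + (-1) * (s - 0) <= / sqrt (q s + eps)).
    { apply (L_lb (fun s => / sqrt (q s + eps)) (fun s => - dd s / (2 * (sqrt (q s + eps))^3)) 0 s (-1)); [lra| |].
      intros r Hr. apply L_invsqrt. apply Dq; lra. pose proof (Hq0 r ltac:(lra)); lra.
      intros r Hr. pose proof (Hq0 r ltac:(lra)). pose proof (Hdd r ltac:(lra)).
      set (S := sqrt (q r + eps)). assert (0 < S) by (apply sqrt_lt_R0; lra).
      pose proof (sqrt3_mono (q r) (q r + eps) ltac:(lra)). fold S in H2.
      pose proof (Rle_abs (dd r)).
      apply Rmult_le_reg_r with (2 * S^3). apply Rmult_lt_0_compat; [lra|apply pow_lt; auto].
      replace (- dd r / (2 * S ^ 3) * (2 * S ^ 3)) with (- dd r) by (field; lra). lra. }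
    assert (H1 : sqrt (1 + eps) = 2 / (1 + t1)).
    { rewrite <- (sqrt_pow2 (2 / (1 + t1))). f_equal. unfold eps. field. lra.
      apply Rdiv_le_0_compat; lra. }
    assert (H2 : / sqrt (1 + eps) <= / sqrt (q 0 + eps)).
    { apply Rinv_le_contravar. apply sqrt_lt_R0. pose proof (Hq0 0). 
      destruct (Rle_or_lt T 0). lra.
      assert (0 <= q 0) by (apply Hq0; lra). lra.
      apply sqrt_le_1_alt. unfold q. lra. }
    rewrite H1 in H2. replace (/ (2 / (1 + t1))) with ((1 + t1) / 2) in H2 by (field; lra).
    set (S := sqrt (q s + eps)) in *.
    assert (0 < S) by (apply sqrt_lt_R0; pose proof (Hq0 s Hs0); lra).
    assert (HSS : S * S = q s + eps) by (apply sqrt_sqrt; pose proof (Hq0 s Hs0); lra).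
    assert (c <= / S) by (unfold c; lra).
    assert (S <= / c). { replace S with (/ / S) by (field; lra). apply Rinv_le_contravar; auto. }
    unfold C. assert (q s <= S * S) by lra.
    replace (/ c ^ 2) with (/ c * / c) by (field; lra).
    assert (S * S <= / c * / c) by (apply Rmult_le_compat; lra). lra. }
  exists (F (p 0) + Rabs (f1 0) + C). intros s Hs0.
  assert (Hf1 : forall r, 0 <= r <= s -> f1 r <= Rabs (f1 0) + C).
  { intros r Hr. assert (f1 r <= f1 0 + C * (r - 0)).
    apply (L_ub f1 q 0 r C); [lra| |]. intros; apply DF; lra. intros; apply HqC; lra.
    pose proof (Rle_abs (f1 0)). assert (0 <= C) by (unfold C; left; apply Rinv_0_lt_compat; apply pow_lt; lra).
    assert (C * r <= C) by (apply Rle_trans with (C * 1); [apply Rmult_le_compat_l|]; lra). lra. }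
  assert (F (p s) <= F (p 0) + (Rabs (f1 0) + C) * (s - 0)).
  apply (L_ub (fun s => F (p s)) f1 0 s); [lra| |auto]. intros; apply DF; lra.
  assert (0 <= Rabs (f1 0) + C).
  { pose proof (Rabs_pos (f1 0)). assert (0 <= C) by (unfold C; left; apply Rinv_0_lt_compat; apply pow_lt; lra). lra. }
  assert ((Rabs (f1 0) + C) * s <= Rabs (f1 0) + C) by (apply Rle_trans with ((Rabs (f1 0) + C) * 1); [apply Rmult_le_compat_l|]; lra).
  lra.
Qed.

Lemma Dikin_open n K F g Hs nu u h t1 : regular_cone n K -> normal_barrier n K F g Hs nu -> cone_int n K u ->
  inE n h -> quad n (Hs u) h <= 1 -> 0 <= t1 < 1 -> cone_int n K (pl u h t1).
Proof. intros HK HB Hu Hh HQ Ht1. pose proof HB as [_ [_ [_ [_ [Hbar _]]]]].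
  pose proof (int_inE _ _ _ Hu) as Hue.
  assert (E0 : pl u h 0 = u) by (unfold pl; vext; ring).
  apply NNPP; intro NH.
  set (E := fun t => 0 <= t <= t1 /\ forall s, 0 <= s <= t -> cone_int n K (pl u h s)).
  assert (HE0 : E 0). { split. lra. intros s Hs0. replace s with 0 by lra. rewrite E0; auto. }
  assert (Hbd : bound E). { exists t1. intros t [Ht _]. lra. }
  destruct (completeness E Hbd (ex_intro _ 0 HE0)) as [T [HTub HTl]].
  assert (HT0 : 0 <= T) by (apply HTub; auto).
  assert (HT1 : T <= t1). { apply HTl. intros t [Ht _]; lra. }
  assert (HA : forall s, 0 <= s < T -> cone_int n K (pl u h s)).
  { intros s Hs0. apply NNPP; intro Hn.
    assert (T <= s); [|lra]. apply HTl. intros t [Ht Ht2].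
    destruct (Rle_or_lt t s); auto. exfalso. apply Hn, Ht2. lra. }
  assert (HB' : ~ cone_int n K (pl u h T)).
  { intro Hc. destruct (int_open _ _ _ Hc) as [r [Hr Hop]].
    set (N := vnorm n h). assert (HN : 0 <= N) by apply vnorm_nonneg.
    set (d := r / (N + 1)). assert (Hd : 0 < d) by (apply Rdiv_lt_0_compat; lra).
    assert (Hnear : forall s, Rabs (s - T) <= d / 2 -> cone_int n K (pl u h s)).
    { intros s Hs0. apply Hop. apply pl_inE; auto. rewrite vdist_pl. fold N.
      apply Rle_lt_trans with (d / 2 * N). apply Rmult_le_compat_r; auto.
      unfold d. apply Rmult_lt_reg_r with (N + 1). lra.
      replace (r / (N + 1) / 2 * N * (N + 1)) with (r * N / 2) by (field; lra). nra. }
    destruct (Req_dec T t1).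
    - apply NH. rewrite <- H. apply Hnear. rewrite Rminus_diag, Rabs_R0; lra.
    - set (t' := Rmin t1 (T + d / 2)).
      assert (HT' : T < t'). { unfold t'. apply Rmin_glb_lt; lra. }
      assert (E t').
      { split. split. lra. apply Rmin_l. intros s Hs0. destruct (Rlt_or_le s T). apply HA; lra.
        apply Hnear. rewrite Rabs_right by lra. assert (t' <= T + d / 2) by apply Rmin_r. lra. }
      pose proof (HTub t' H0). lra. }
  assert (HTp : 0 < T). { destruct (Req_dec T 0); [|lra]. exfalso. apply HB'. rewrite H, E0; auto. }
  assert (HKT : K (pl u h T)).
  { pose proof HK as [_ [_ [Hcl _]]]. apply Hcl. apply pl_inE; auto.
    intros e He. destruct (approach_left T (vnorm n h) e HTp (vnorm_nonneg n h) He) as [s [Hs0 Hs1]].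
    exists (pl u h s). split. apply (int_K n). apply HA; auto. rewrite vdist_pl; auto. }
  destruct (Fbound n K F g Hs nu u h t1 T HK HB Hh) as [M0 HM0]; auto. rewrite E0; auto.
  destruct (Hbar _ HKT HB' M0) as [del [Hdel Hd]].
  destruct (approach_left T (vnorm n h) del HTp (vnorm_nonneg n h) Hdel) as [s [Hs0 Hs1]].
  assert (M0 < F (pl u h s)). apply Hd. apply HA; auto. rewrite vdist_pl; auto.
  pose proof (HM0 s Hs0). lra.
Qed.

Lemma Dikin n K F g Hs nu u w : regular_cone n K -> normal_barrier n K F g Hs nu -> cone_int n K u ->
  inE n w -> quad n (Hs u) (vsub w u) <= 1 -> K w.
Proof. intros HK HB Hu Hw HQ. pose proof (int_inE _ _ _ Hu) as Hue.
  set (h := vsub w u). assert (Hh : inE n h) by (apply inE_sub; auto).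
  assert (Ew : pl u h 1 = w) by (unfold pl, h; vext; ring).
  pose proof HK as [_ [_ [Hcl _]]]. apply Hcl; auto.
  intros e He. destruct (approach_left 1 (vnorm n h) e ltac:(lra) (vnorm_nonneg n h) He) as [s [Hs0 Hs1]].
  exists (pl u h s). split. apply (int_K n). apply (Dikin_open n K F g Hs nu); auto.
  rewrite <- Ew, vdist_pl. auto.
Qed.

Lemma LemA n K F g Hs nu H u x : regular_cone n K -> normal_barrier n K F g Hs nu ->
  (forall h, inE n h -> 0 <= quad n H h) -> inE n u ->
  (forall w, inE n w -> quad n H (vsub w u) <= 1 -> K w) ->
  cone_int n K x -> 0 <= dot n (g x) (vsub u x) ->
  forall h, inE n h -> quad n (Hs x) h <= 2 * nu^2 * quad n H h.
Proof. intros HK HB Hpsd Hu Hell Hx Hg h Hh.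
  pose proof HB as [_ [_ [Hpsd2 _]]].
  assert (Hell2 : forall s, s^2 * quad n H h <= 1 -> K (vadd u (vscal s h))).
  { intros s Hs0. apply Hell. apply inE_add; auto; apply inE_scal; auto.
    replace (vsub (vadd u (vscal s h)) u) with (vscal s h) by (vext; ring). rewrite quad_scal; auto. }
  assert (Ku : K u). { replace u with (vadd u (vscal 0 h)) by (vext; ring). apply Hell2.
    pose proof (Hpsd h Hh). nra. }
  pose proof (I2 n K F g Hs nu x HK HB Hx) as HI2.
  pose proof (I1 n K F g Hs nu x u HK HB Hx Ku) as HI1.
  rewrite dot_subr, HI2 in Hg.
  set (al := - dot n (g x) u). set (Q := quad n (Hs x) h). set (q := quad n H h).
  set (be := dot n (g x) h).
  assert (Hbound : forall s, s^2 * q <= 1 -> s^2 * Q <= 2 * nu^2).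
  { intros s Hs0. assert (Kp : K (vadd u (vscal s h))) by (apply Hell2; auto).
    assert (Km : K (vadd u (vscal (-s) h))). apply Hell2. replace ((-s)^2) with (s^2) by ring. auto.
    pose proof (I1 n K F g Hs nu x _ HK HB Hx Kp) as I1p.
    pose proof (I1 n K F g Hs nu x _ HK HB Hx Km) as I1m.
    pose proof (I3 n K F g Hs nu x _ HK HB Hx Kp) as I3p.
    pose proof (I3 n K F g Hs nu x _ HK HB Hx Km) as I3m.
    rewrite dot_addr, dot_scalr in I1p, I1m, I3p, I3m.
    pose proof (quad_par n (Hs x) u (vscal s h)) as Hpar.
    replace (vsub u (vscal s h)) with (vadd u (vscal (-s) h)) in Hpar by (vext; ring).
    rewrite quad_scal in Hpar. fold Q in Hpar. fold be in I1p, I1m, I3p, I3m.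
    assert (0 <= quad n (Hs x) u) by (apply Hpsd2; auto).
    assert (dot n (g x) u = - al) by (unfold al; ring). rewrite H1 in *.
    nra. }
  assert (HQ0 : 0 <= Q) by (apply Hpsd2; auto). assert (Hq0 : 0 <= q) by (apply Hpsd; auto).
  destruct (Rlt_or_le 0 q).
  - assert (Hs2 : (/ sqrt q)^2 = / q) by (rewrite pow_inv, pow2_sqrt; lra).
    specialize (Hbound (/ sqrt q)). rewrite Hs2 in Hbound.
    assert (Hq : / q * q <= 1) by (rewrite Rinv_l; lra).
    specialize (Hbound Hq). apply Rmult_le_reg_l with (/ q). apply Rinv_0_lt_compat; auto.
    replace (/ q * (2 * nu ^ 2 * q)) with (2 * nu^2) by (field; lra). auto.
  - assert (Hqz : q = 0) by lra. rewrite Hqz. destruct (Rlt_or_le 0 Q); [|lra]. exfalso.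
    specialize (Hbound (sqrt ((2 * nu^2 + 1) / Q))). rewrite pow2_sqrt in Hbound.
    2: { apply Rdiv_le_0_compat; nra. }
    rewrite Hqz in Hbound. replace ((2 * nu ^ 2 + 1) / Q * Q) with (2 * nu^2 + 1) in Hbound by (field; lra).
    assert (2 * nu ^ 2 + 1 <= 2 * nu ^ 2). apply Hbound. lra. lra.
Qed.

Lemma fin nu Q q : 0 <= Q -> 0 <= q -> Q <= 2 * nu^2 * q -> 1 / (4 * nu^2) * Q <= q.
Proof. intros. destruct (Req_dec nu 0). subst. assert (Q = 0) by nra. subst. lra.
  assert (0 < nu^2) by nra.
  apply Rle_trans with (1 / (4 * nu^2) * (2 * nu^2 * q)).
  apply Rmult_le_compat_l; auto. apply Rdiv_le_0_compat; lra.
  replace (1 / (4 * nu ^ 2) * (2 * nu ^ 2 * q)) with (q / 2) by (field; lra). lra. Qed.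

Theorem mainTheorem1 (n : nat) (K : Vec -> Prop) (F : Vec -> R)
  (g : Vec -> Vec) (Hs : Vec -> Mat) (nu : R) :
  regular_cone n K ->
  normal_barrier n K F g Hs nu ->
  (forall (H : Mat) (u x : Vec),
     selfadj_op n H -> posdef_op n H -> inE n u ->
     (forall w, inE n w -> quad n H (vsub w u) <= 1 -> K w) ->
     cone_int n K x ->
     0 <= dot n (g x) (vsub u x) ->
     loewner_le n (mscal (1 / (4 * nu ^ 2)) (Hs x)) H) /\
  (forall x u : Vec,
     cone_int n K x -> cone_int n K u ->
     0 <= dot n (g x) (vsub u x) ->
     loewner_le n (mscal (1 / (4 * nu ^ 2)) (Hs x)) (Hs u)) /\
  (forall x u : Vec,
     cone_int n K x -> K u ->
     loewner_le n (Hs (vadd x u)) (mscal (4 * nu ^ 2) (Hs x))).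
Proof. intros HK HB. pose proof HB as [_ [_ [Hpsd2 _]]]. split; [|split].
  - intros H u x _ Hpd Hu Hell Hx Hg h Hh. rewrite quad_mscal.
    assert (Hpsd : forall h, inE n h -> 0 <= quad n H h).
    { intros k Hk. destruct (classic (k = vzero)). subst; rewrite quad_zero; lra. left; apply Hpd; auto. }
    apply fin. apply Hpsd2; auto. apply Hpsd; auto.
    apply (LemA n K F g Hs nu H u x); auto.
  - intros x u Hx Hu Hg h Hh. rewrite quad_mscal.
    apply fin. apply Hpsd2; auto. apply Hpsd2; auto.
    apply (LemA n K F g Hs nu (Hs u) u x HK HB (fun k Hk => Hpsd2 u k Hu Hk) (int_inE _ _ _ Hu)); auto.
    intros w Hw Hq. apply (Dikin n K F g Hs nu u w); auto.
  - intros x u Hx Hu h Hh. rewrite quad_mscal.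
    assert (Hy : cone_int n K (vadd x u)) by (apply int_add; auto).
    assert (quad n (Hs (vadd x u)) h <= 2 * nu^2 * quad n (Hs x) h).
    { apply (LemA n K F g Hs nu (Hs x) x (vadd x u) HK HB (fun k Hk => Hpsd2 x k Hx Hk) (int_inE _ _ _ Hx)); auto.
      intros w Hw Hq. apply (Dikin n K F g Hs nu x w); auto.
      replace (vsub x (vadd x u)) with (vscal (-1) u) by (vext; ring). rewrite dot_scalr.
      pose proof (I1 n K F g Hs nu _ _ HK HB Hy Hu). lra. }
    assert (0 <= quad n (Hs x) h) by (apply Hpsd2; auto). nra.
Qed.
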